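(* Let $F$ be a subfield of $\mathbb{R}$ and let $\sigma\subseteq\mathbb{R}^n$ be a $k$-dimensional $F$-simplex with one vertex $v_0$ at the origin. Then there is an orthogonal basis $U$ of $\mathbb{R}^n$ such that the squared length of each vector in $U$ lies in $F$ and all coordinates of all vertices of $\sigma$ with respect to $U$ lie in $F$.
   Context: A Euclidean simplex is an $F$-simplex if the square of the length of each of its edges ($1$-cells) lies in $F$. *)

(* Defs.v *)
From HB Require Import structures.
From mathcomp Require Import all_boot all_order all_algebra.
From mathcomp Require Import reals.
Set Implicit Arguments. Unset Strict Implicit. Unset Printing Implicit Defensive.
Import Order.TTheory GRing.Theory Num.Theory.
Local Open Scope ring_scope.

Definition dotv (R : realType) (n : nat) (u v : 'rV[R]_n) : R :=
  \sum_(i < n) u 0 i * v 0 i.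

Definition sqlen (R : realType) (n : nat) (u : 'rV[R]_n) : R := dotv u u.

Definition is_subfield (R : realType) (F : {pred R}) : Prop :=
  [/\ 0 \in F, 1 \in F,
      (forall x y, x \in F -> y \in F -> x - y \in F),
      (forall x y, x \in F -> y \in F -> x * y \in F) &
      (forall x, x \in F -> x != 0 -> x^-1 \in F)].

Definition affinely_independent (R : realType) (n k : nat)
    (v : 'I_k.+1 -> 'rV[R]_n) : Prop :=
  forall c : 'I_k.+1 -> R,
    \sum_(i < k.+1) c i = 0 -> \sum_(i < k.+1) c i *: v i = 0 ->
    forall i, c i = 0.

Definition F_simplex (R : realType) (F : {pred R}) (n k : nat)
    (v : 'I_k.+1 -> 'rV[R]_n) : Prop :=
  affinely_independent v /\ forall i j, sqlen (v i - v j) \in F.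

(* U : 'I_n -> R^n is an orthogonal basis of R^n: nonzero pairwise
   orthogonal vectors, n of them (hence a basis). *)
Definition orthogonal_basis (R : realType) (n : nat) (U : 'I_n -> 'rV[R]_n)
  : Prop :=
  (forall j, U j != 0) /\ (forall j l, j != l -> dotv (U j) (U l) = 0).

(* Main.v *)
Require Import Defs.
From HB Require Import structures.
From mathcomp Require Import all_boot all_order all_algebra.
From mathcomp Require Import reals ring.
Import Order.TTheory GRing.Theory Num.Theory.
Local Open Scope ring_scope.
Set Implicit Arguments. Unset Strict Implicit.

Lemma dotvC (R : realType) n (x y : 'rV[R]_n) : dotv x y = dotv y x.
Proof. by rewrite /dotv; apply: eq_bigr => i _; rewrite mulrC. Qed.

Lemma dotvDl (R : realType) n (x y w : 'rV[R]_n) :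
  dotv (x + y) w = dotv x w + dotv y w.
Proof. by rewrite /dotv -big_split; apply: eq_bigr => i _; rewrite mxE mulrDl. Qed.

Lemma dotvZl (R : realType) n a (x w : 'rV[R]_n) :
  dotv (a *: x) w = a * dotv x w.
Proof. by rewrite /dotv mulr_sumr; apply: eq_bigr => i _; rewrite mxE mulrA. Qed.

Lemma dotvNl (R : realType) n (x w : 'rV[R]_n) : dotv (- x) w = - dotv x w.
Proof. by rewrite /dotv -sumrN; apply: eq_bigr => i _; rewrite mxE mulNr. Qed.

Lemma dotvBl (R : realType) n (x y w : 'rV[R]_n) :
  dotv (x - y) w = dotv x w - dotv y w.
Proof. by rewrite dotvDl dotvNl. Qed.

Lemma dotv0l (R : realType) n (w : 'rV[R]_n) : dotv 0 w = 0.
Proof. by rewrite /dotv big1 // => i _; rewrite mxE mul0r. Qed.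

Lemma dotv0r (R : realType) n (w : 'rV[R]_n) : dotv w 0 = 0.
Proof. by rewrite dotvC dotv0l. Qed.

Lemma dotv_suml (R : realType) n (I : Type) (r : seq I) (P : pred I)
  (f : I -> 'rV[R]_n) w :
  dotv (\sum_(i <- r | P i) f i) w = \sum_(i <- r | P i) dotv (f i) w.
Proof.
elim/big_rec2: _ => [|i x y _ <-]; first by rewrite dotv0l.
by rewrite dotvDl.
Qed.

Lemma dotvZr (R : realType) n a (x w : 'rV[R]_n) :
  dotv w (a *: x) = a * dotv w x.
Proof. by rewrite dotvC dotvZl dotvC. Qed.

Lemma dotvBr (R : realType) n (x y w : 'rV[R]_n) :
  dotv w (x - y) = dotv w x - dotv w y.
Proof. by rewrite dotvC dotvBl !(dotvC w). Qed.

Lemma dotv_sumr (R : realType) n (I : Type) (r : seq I) (P : pred I)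
  (f : I -> 'rV[R]_n) w :
  dotv w (\sum_(i <- r | P i) f i) = \sum_(i <- r | P i) dotv w (f i).
Proof. by rewrite dotvC dotv_suml; apply: eq_bigr => i _; rewrite dotvC. Qed.

Lemma sqlen_ge0 (R : realType) n (x : 'rV[R]_n) : 0 <= sqlen x.
Proof. by rewrite /sqlen /dotv sumr_ge0 // => i _; rewrite -expr2 sqr_ge0. Qed.

Lemma sqlen_eq0 (R : realType) n (x : 'rV[R]_n) : sqlen x = 0 -> x = 0.
Proof.
move=> /eqP; rewrite /sqlen /dotv psumr_eq0; last by move=> i _; rewrite -expr2 sqr_ge0.
move=> /allP H; apply/rowP => i; rewrite mxE.
by have := H i (mem_index_enum i); rewrite /= -expr2 sqrf_eq0 => /eqP ->.
Qed.

Lemma sqlenZ (R : realType) n a (x : 'rV[R]_n) : sqlen (a *: x) = a ^+ 2 * sqlen x.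
Proof. by rewrite /sqlen dotvZl dotvZr mulrA expr2. Qed.

Lemma sqlenB (R : realType) n (x y : 'rV[R]_n) :
  sqlen (x - y) = sqlen x + sqlen y - dotv x y *+ 2.
Proof.
rewrite /sqlen dotvBl !dotvBr (dotvC y x).
by ring.
Qed.

Lemma sum_cast (V : zmodType) p q (E : p = q) (G : 'I_p -> V) :
  \sum_(i < p) G i = \sum_(j < q) G (cast_ord (esym E) j).
Proof. by case: q / E; apply: eq_bigr => i _; congr G; apply/val_inj. Qed.

Fixpoint gs (R : realType) n (z : nat -> 'rV[R]_n) (m : nat) : seq 'rV[R]_n :=
  if m is m'.+1 then
    rcons (gs z m') (z m' - \sum_(x <- gs z m') (dotv (z m') x / sqlen x) *: x)
  else [::].

Definition gsu (R : realType) n (z : nat -> 'rV[R]_n) m := nth 0 (gs z m.+1) m.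

Lemma size_gs (R : realType) n (z : nat -> 'rV[R]_n) m : size (gs z m) = m.
Proof. by elim: m => //= m IH; rewrite size_rcons IH. Qed.

Lemma gsu_last (R : realType) n (z : nat -> 'rV[R]_n) m :
  gsu z m = z m - \sum_(x <- gs z m) (dotv (z m) x / sqlen x) *: x.
Proof. by rewrite /gsu /= nth_rcons size_gs ltnn eqxx. Qed.

Lemma gs_map (R : realType) n (z : nat -> 'rV[R]_n) m :
  gs z m = [seq gsu z l | l <- iota 0 m].
Proof.
elim: m => // m IH.
have -> : iota 0 m.+1 = rcons (iota 0 m) m.
  by rewrite -cats1 -(iotaD 0 m 1) addn1.
by rewrite map_rcons -IH [gs z m.+1]/= -gsu_last.
Qed.

Definition coef (R : realType) n (z : nat -> 'rV[R]_n) m l :=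
  dotv (z m) (gsu z l) / sqlen (gsu z l).

Lemma gsu_eq (R : realType) n (z : nat -> 'rV[R]_n) m :
  gsu z m = z m - \sum_(l < m) coef z m l *: gsu z l.
Proof.
rewrite gsu_last gs_map big_map.
have -> : iota 0 m = index_iota 0 m by rewrite /index_iota subn0.
by rewrite big_mkord.
Qed.

Lemma gs_orth (R : realType) n (z : nat -> 'rV[R]_n) m l :
  (l < m)%N -> dotv (gsu z m) (gsu z l) = 0.
Proof.
elim/ltn_ind: m l => m IH l lm.
have [s0|s0] := eqVneq (sqlen (gsu z l)) 0.
  by rewrite (sqlen_eq0 s0) dotv0r.
rewrite {1}gsu_eq dotvBl dotv_suml (bigD1 (Ordinal lm)) //= big1 => [|j /= jl].
  by rewrite addr0 dotvZl -/(sqlen _) /coef divfK // subrr.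
rewrite dotvZl; case: (ltngtP j l) => [jl'|lj|e].
- by rewrite dotvC IH // mulr0.
- by rewrite IH // mulr0.
by case/eqP: jl; apply/val_inj.
Qed.

Lemma gs_sqlen (R : realType) n (z : nat -> 'rV[R]_n) m :
  sqlen (gsu z m) = dotv (z m) (gsu z m).
Proof.
rewrite /sqlen {1}gsu_eq dotvBl dotv_suml big1 ?subr0 // => j _.
by rewrite dotvZl dotvC (gs_orth z (ltn_ord j)) mulr0.
Qed.

Definition dco (R : realType) n (z : nat -> 'rV[R]_n) m (l : nat) : R :=
  if (l < m.+1)%N then (if l == m then 1 else coef z m l) else 0.

Lemma gs_decomp (R : realType) n (z : nat -> 'rV[R]_n) N m : (m < N)%N ->
  z m = \sum_(l < N) dco z m l *: gsu z l.
Proof.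
move=> mN.
have -> : \sum_(l < N) dco z m l *: gsu z l =
   \sum_(l < N | (l < m.+1)%N) (if l == m :> nat then 1 else coef z m l) *: gsu z l.
  by rewrite [RHS]big_mkcond; apply: eq_bigr => l _; rewrite /dco; case: ifP; rewrite ?scale0r.
rewrite -(big_ord_widen N (fun l => (if l == m then 1 else coef z m l) *: gsu z l) mN).
rewrite big_ord_recr /= eqxx scale1r.
rewrite (eq_bigr (fun l : 'I_m => coef z m l *: gsu z l)) => [|l _]; last by rewrite ltn_eqF.
by rewrite (gsu_eq z m) addrC subrK.
Qed.

Lemma sfN (R : realType) (F : {pred R}) x : is_subfield F -> x \in F -> - x \in F.
Proof. by case=> F0 _ FB _ _ Fx; rewrite -sub0r FB. Qed.

Lemma sfD (R : realType) (F : {pred R}) x y : is_subfield F -> x \in F -> y \in F -> x + y \in F.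
Proof. by move=> HF Fx Fy; case: (HF) => _ _ FB _ _; rewrite -[y]opprK FB // sfN. Qed.

Lemma sfV (R : realType) (F : {pred R}) x : is_subfield F -> x \in F -> x^-1 \in F.
Proof.
case=> F0 _ _ _ FV Fx; have [->|x0] := eqVneq x 0; first by rewrite invr0.
exact: FV.
Qed.

Lemma sfsum (R : realType) (F : {pred R}) (I : Type) (r : seq I) (P : pred I) (f : I -> R) :
  is_subfield F -> (forall i, P i -> f i \in F) -> \sum_(i <- r | P i) f i \in F.
Proof.
move=> HF Hf; apply: (big_ind (fun x => x \in F)) => //; first by case: HF.
by move=> x y; apply: sfD.
Qed.

Lemma gs_F (R : realType) (F : {pred R}) n (z : nat -> 'rV[R]_n) K :
  is_subfield F -> (forall i j, (i < K)%N -> (j < K)%N -> dotv (z i) (z j) \in F) ->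
  forall m, (m < K)%N -> forall i, (i < K)%N -> dotv (z i) (gsu z m) \in F.
Proof.
move=> HF Hz; elim/ltn_ind => m IH mK i iK.
have [_ _ FB FM _] := HF.
rewrite gsu_eq dotvBr dotv_sumr FB ?Hz //; apply: sfsum => // l _.
have lK : (l < K)%N := ltn_trans (ltn_ord l) mK.
rewrite dotvZr FM ?IH // /coef FM ?IH // sfV // gs_sqlen IH //.
Qed.

Lemma dco_F (R : realType) (F : {pred R}) n (z : nat -> 'rV[R]_n) K :
  is_subfield F -> (forall i j, (i < K)%N -> (j < K)%N -> dotv (z i) (z j) \in F) ->
  forall m l, (m < K)%N -> dco z m l \in F.
Proof.
move=> HF Hz m l mK; have [F0 F1 _ FM _] := HF; rewrite /dco.
case: ifP => // lm; case: ifP => // _.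
have lK : (l < K)%N := leq_ltn_trans (lm : (l <= m)%N) mK.
by rewrite /coef FM ?(gs_F HF Hz) // sfV // gs_sqlen (gs_F HF Hz).
Qed.

Unset Implicit Arguments.

Theorem lemma6p3 (R : realType) (F : {pred R}) (n k : nat)
    (v : 'I_k.+1 -> 'rV[R]_n) :
  is_subfield F -> F_simplex F v -> v ord0 = 0 ->
  exists U : 'I_n -> 'rV[R]_n,
    [/\ orthogonal_basis U,
        (forall j, sqlen (U j) \in F) &
        (forall i, exists c : 'I_n -> R,
           (forall j, c j \in F) /\ v i = \sum_(j < n) c j *: U j)].
Proof.
move=> HF [_ Hsq] v0.
have [F0 F1 FB FM FV] := HF.
have Hd : forall a b, dotv (v a) (v b) \in F.
  move=> a b.
  have e : dotv (v a) (v b) = (sqlen (v a) + sqlen (v b) - sqlen (v a - v b)) / 2.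
    by rewrite sqlenB; field.
  have sF : forall c, sqlen (v c) \in F by move=> c; have := Hsq c ord0; rewrite v0 subr0.
  have F2 : (2 : R) \in F by rewrite -[2]/(1 + 1) sfD.
  by rewrite e FM ?sfV ?FB ?sfD ?sF ?Hsq.
pose z : nat -> 'rV[R]_n := fun m => if (m < k)%N then v (inord m.+1)
  else \row_(j < n) ((j == (m - k)%N :> nat)%:R : R).
pose u := gsu z.
have HzF : forall i j, (i < k)%N -> (j < k)%N -> dotv (z i) (z j) \in F.
  by move=> i j ik jk; rewrite /z ik jk.
have HuF := gs_F HF HzF.
pose t (l : nat) : R := if (l < k)%N then 1 else (Num.sqrt (sqlen (u l)))^-1.
pose U' (l : 'I_(k+n)) := t l *: u l.
pose S := [set l : 'I_(k+n) | u l != 0].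
have U1 : forall l, l \in S -> U' l != 0.
  move=> l; rewrite inE => ul; rewrite /U' scaler_eq0 negb_or ul andbT /t.
  case: ifP => _; first exact: oner_neq0.
  rewrite invr_eq0 sqrtr_eq0 -ltNge lt_def sqlen_ge0 andbT.
  by apply: contra ul => /eqP/sqlen_eq0 ->.
have U0 : forall l, l \notin S -> U' l = 0.
  by move=> l; rewrite inE negbK => /eqP; rewrite /U' => ->; rewrite scaler0.
have U2 : forall a b : 'I_(k+n), a != b -> dotv (U' a) (U' b) = 0.
  move=> a b ab; rewrite /U' dotvZl dotvZr; case: (ltngtP a b) => [h|h|h].
  - by rewrite dotvC gs_orth // !mulr0.
  - by rewrite gs_orth // !mulr0.
  by case/eqP: ab; apply/val_inj.
have U3 : forall l, sqlen (U' l) \in F.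
  move=> l; rewrite /U' sqlenZ /t; case: ifP => lk.
    by rewrite expr1n mul1r gs_sqlen HuF.
  have [s0|s0] := eqVneq (sqlen (u l)) 0; first by rewrite s0 mulr0.
  by rewrite exprVn sqr_sqrtr ?sqlen_ge0 // mulVf.
have U4 : forall l : 'I_(k+n), u l = (if (l < k)%N then 1 else Num.sqrt (sqlen (u l))) *: U' l.
  move=> l; rewrite /U' scalerA /t; case: ifP => _; first by rewrite mulr1 scale1r.
  have [s0|s0] := eqVneq (sqlen (u l)) 0.
    by rewrite [u l](sqlen_eq0 s0) !scaler0.
  by rewrite divff ?scale1r // sqrtr_eq0 -ltNge lt_def s0 sqlen_ge0.
have toS : forall a : 'I_(k+n) -> R, \sum_(l < k+n) a l *: U' l =
    \sum_(i < #|S|) a (enum_val i) *: U' (enum_val i).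
  move=> a; have -> : \sum_(l < k+n) a l *: U' l = \sum_(l in S) a l *: U' l.
    rewrite [RHS]big_mkcond.
    by apply: eq_bigr => l _; case: ifP => // /negbT /U0 ->; rewrite scaler0.
  by rewrite big_enum_val.
pose M := \matrix_(i < #|S|, j < n) U' (enum_val i) 0 j.
have rowM : forall i, row i M = U' (enum_val i) by move=> i; apply/rowP => j; rewrite !mxE.
have le1 : (#|S| <= n)%N.
  have D : M *m M^T = diag_mx (\row_i sqlen (U' (enum_val i))).
    apply/matrixP => i j; rewrite !mxE.
    have -> : \sum_l M i l * M^T l j = dotv (U' (enum_val i)) (U' (enum_val j)).
      by apply: eq_bigr => l _; rewrite !mxE.
    case: (eqVneq i j) => [->|ij]; first by rewrite mulr1n.
    rewrite mulr0n U2 //; apply: contra ij => /eqP/enum_val_inj ->; exact: eqxx.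
  have un : M *m M^T \in unitmx.
    rewrite D unitmxE det_diag unitfE; apply/prodf_neq0 => i _; rewrite mxE.
    by apply: contra (U1 _ (enum_valP i)) => /eqP/sqlen_eq0 ->.
  rewrite -{1}(mxrank_unit un).
  exact: leq_trans (mxrankM_maxl _ _) (rank_leq_col _).
have le2 : (n <= #|S|)%N.
  have sub : (1%:M <= M)%MS.
    apply/row_subP => j.
    have e : row j (1%:M : 'M_n) = z (k + j)%N.
      by apply/rowP => i; rewrite /z !mxE ltnNge leq_addr /= addKn mxE eq_sym.
    have jN : (k + j < k + n)%N by rewrite ltn_add2l.
    rewrite e (gs_decomp z jN).
    rewrite (eq_bigr (fun l : 'I_(k+n) => (dco z (k + j) l *
       (if (l < k)%N then 1 else Num.sqrt (sqlen (u l)))) *: U' l)); last first.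
      by move=> l _; rewrite -scalerA -U4.
    rewrite toS; apply: summx_sub => i _; apply: scalemx_sub.
    by rewrite -rowM row_sub.
  have := mxrankS sub; rewrite mxrank1 => h; exact: leq_trans h (rank_leq_row _).
have eqS : #|S| = n by apply/eqP; rewrite eqn_leq le1 le2.
exists (fun j => U' (enum_val (cast_ord (esym eqS) j))).
split.
- split; first by move=> j; exact: U1 (enum_valP _).
  move=> j l jl; apply: U2; apply: contra jl => /eqP/enum_val_inj/cast_ord_inj ->.
  exact: eqxx.
- by move=> j; exact: U3.
move=> i.
have [d [dF ->]] : exists d : 'I_(k+n) -> R, (forall l, d l \in F) /\
    v i = \sum_(l < k+n) d l *: U' l.
  case: (unliftP ord0 i) => [j ->|->]; last first.
    by exists (fun _ => 0); split => //; rewrite v0 big1 // => l _; rewrite scale0r.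
  exists (fun l => dco z j l); split.
    by move=> l; apply: (dco_F HF HzF).
  have -> : v (lift ord0 j) = z j.
    by rewrite /z ltn_ord; congr v; apply/val_inj; rewrite /= inordK // ltnS.
  rewrite (gs_decomp z (ltn_addr n (ltn_ord j))); apply: eq_bigr => l _.
  rewrite /U' /t; case: ifP => lk; first by rewrite scale1r.
  rewrite /dco ifN ?scale0r // -leqNgt; apply: leq_trans (ltn_ord j) _.
  by rewrite leqNgt lk.
exists (fun j => d (enum_val (cast_ord (esym eqS) j))); split; first by move=> j; apply: dF.
by rewrite toS (sum_cast eqS).
Qed.
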